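(* Let $\mathbf{k}$ be an algebraically closed field of characteristic $0$, $G=\mathrm{GL}_2$, $(\rho,L)$ the $3$-dimensional irreducible rational representation $L=L(2\epsilon_1)$, $\underline{G}=G\ltimes_\rho L$, and $\underline{\mathcal{N}}=\mathcal{N}\times L$ where $\mathcal{N}$ is the nilpotent cone of $\mathfrak{gl}_2$. Let $J_2=\begin{pmatrix}0&1\\0&0\end{pmatrix}$, let $v_0\in L$ be a nonzero lowest weight vector and $v_i=\mathsf{d}\rho(J_2)^iv_0$ for $i=1,2$. Then $\underline{\mathcal{N}}$ is the disjoint union of exactly five $\underline{G}$-orbits, namely the orbits $\mathcal{O}_1,\dots,\mathcal{O}_5$ of $(0,0)$, $(0,v_0)$, $(0,v_0+v_2)$, $(J_2,0)$, $(J_2,v_0)$ respectively.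
   Context: $L(2\epsilon_1)$ can be realized as the quadratic forms in $x,y$ with $\mathrm{GL}_2$ acting by linear substitution. $\underline{G}$ is $G\times L$ with product $(g_1,v_1)(g_2,v_2)=(g_1g_2,\rho(g_1)v_2+v_1)$ and adjoint action $\mathrm{Ad}(g,v)(X,w)=(\mathrm{Ad}(g)X,-\mathsf{d}\rho(\mathrm{Ad}(g)X)v+\rho(g)w)$ on $\mathfrak{gl}_2\times L$. $\{v_0,v_1,v_2\}$ is a basis of $L$. *)

(* Defs.v *)
From HB Require Import structures.
From mathcomp Require Import all_boot all_order all_algebra.
Set Implicit Arguments. Unset Strict Implicit. Unset Printing Implicit Defensive.
Import Order.TTheory GRing.Theory Num.Theory.
Local Open Scope ring_scope.

(* L = L(2 eps_1) realized as binary quadratic forms a x^2 + b xy + c y^2,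
   stored as the column vector (a, b, c) w.r.t. the basis (x^2, xy, y^2).
   GL_2 acts by linear substitution  (rho g f)(x,y) = f((x,y) g), i.e.
   x |-> g11 x + g21 y,  y |-> g12 x + g22 y.  This is Sym^2 of the standard
   representation (x = e1, y = e2), i.e. L(2 eps_1). The formula is
   polynomial, so we define it over any commutative ring. *)
Definition rho (R : comNzRingType) (g : 'M[R]_2) : 'M[R]_3 :=
  let g11 := g 0 0 in let g12 := g 0 1 in
  let g21 := g 1 0 in let g22 := g 1 1 in
  \matrix_(i < 3, j < 3)
    nth 0 (nth [::] [:: [:: g11 ^+ 2; g11 * g12; g12 ^+ 2];
        [:: 2 * g11 * g21; g11 * g22 + g21 * g12; 2 * g12 * g22];
        [:: g21 ^+ 2; g21 * g22; g22 ^+ 2]] i) j.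

(* The differential d rho : gl_2 -> gl(L), computed as
   d/dt rho(1 + t X) at t = 0, with t a polynomial variable. *)
Definition drho (k : comNzRingType) (X : 'M[k]_2) : 'M[k]_3 :=
  map_mx (fun p : {poly k} => (deriv p).[0])
    (rho (1%:M + map_mx polyC X *m ('X)%:M)).

Definition J2 (k : comNzRingType) : 'M[k]_2 := \matrix_(i < 2, j < 2)
  (if (i == 0 :> nat) && (j == 1 :> nat) then 1 else 0).

Definition E21 (k : comNzRingType) : 'M[k]_2 := \matrix_(i < 2, j < 2)
  (if (i == 1 :> nat) && (j == 0 :> nat) then 1 else 0).

(* a nonzero lowest weight vector (Borel = upper triangular, torus = diagonal):
   a weight vector for the diagonal Cartan subalgebra killed by the negative
   root vector E21 *)
Definition lowest_weight_vector (k : comNzRingType) (v : 'cV[k]_3) : Prop :=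
  v != 0 /\
  (forall H : 'M[k]_2, is_diag_mx H -> exists c : k, drho H *m v = c *: v) /\
  drho (E21 k) *m v = 0.

Definition nilpotent (k : comNzRingType) (X : 'M[k]_2) : Prop :=
  exists n : nat, X ^+ n = 0.

Definition Ncone_ (k : comNzRingType) (p : 'M[k]_2 * 'cV[k]_3) : Prop :=
  nilpotent p.1.

(* adjoint action of (g, v) in G x| L on (X, w) in gl_2 x L *)
Definition Ad (k : comUnitRingType) (g : 'M[k]_2) (v : 'cV[k]_3)
  (p : 'M[k]_2 * 'cV[k]_3) : 'M[k]_2 * 'cV[k]_3 :=
  let Y := g *m p.1 *m invmx g in
  (Y, - (drho Y *m v) + rho g *m p.2).

Definition orbit_ (k : comUnitRingType) (p : 'M[k]_2 * 'cV[k]_3)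
  (q : 'M[k]_2 * 'cV[k]_3) : Prop :=
  exists (g : 'M[k]_2) (v : 'cV[k]_3), g \in unitmx /\ q = Ad g v p.

(* Main.v *)
Require Import Defs.
From HB Require Import structures.
From mathcomp Require Import all_boot all_order all_algebra.
From mathcomp Require Import ring.
Import Order.TTheory GRing.Theory Num.Theory.
Local Open Scope ring_scope.

Ltac mxext := apply/matrixP;
  case => [[|[|[|?]]] ?] //; case => [[|[|[|?]]] ?] //;
  rewrite ?(mxE, big_ord_recl, big_ord0) /=.


Section S.
Variable R : comNzRingType.
Definition mk2 (a b c d : R) : 'M[R]_2 :=
  \matrix_(i < 2, j < 2) nth 0 (nth [::] [:: [:: a; b]; [:: c; d]] i) j.
Definition mk3 (a b c : R) : 'cV[R]_3 := \col_(i < 3) nth 0 [:: a; b; c] i.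
Lemma mk2E (g : 'M[R]_2) : g = mk2 (g 0 0) (g 0 1) (g 1 0) (g 1 1).
Proof. by apply/matrixP; case => [[|[|[|?]]] ?] //; case => [[|[|[|?]]] ?] //; rewrite mxE /=; congr (g _ _); apply: val_inj. Qed.
Lemma mk3E (v : 'cV[R]_3) : v = mk3 (v 0 0) (v 1 0) (v 2 0).
Proof. by apply/matrixP; case => [[|[|[|?]]] ?] //; case => [[|?] ?] //; rewrite mxE /=; congr (v _ _); apply: val_inj. Qed.

Definition Dp (P Q : 'M[R]_2) : 'M[R]_3 := \matrix_(i < 3, j < 3)
    nth 0 (nth [::] [:: [:: 2 * P 0 0 * Q 0 0; P 0 0 * Q 0 1 + Q 0 0 * P 0 1; 2 * P 0 1 * Q 0 1];
        [:: 2 * (P 0 0 * Q 1 0 + Q 0 0 * P 1 0);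
            P 0 0 * Q 1 1 + Q 0 0 * P 1 1 + P 1 0 * Q 0 1 + Q 1 0 * P 0 1;
            2 * (P 0 1 * Q 1 1 + Q 0 1 * P 1 1)];
        [:: 2 * P 1 0 * Q 1 0; P 1 0 * Q 1 1 + Q 1 0 * P 1 1; 2 * P 1 1 * Q 1 1]] i) j.

Lemma dM (p q : {poly R}) : (deriv (p*q)).[0] = (deriv p).[0]*q.[0] + p.[0]*(deriv q).[0].
Proof. by rewrite derivM hornerD !hornerM mulrC [_ * (deriv q).[0]]mulrC. Qed.
Lemma dD (p q : {poly R}) : (deriv (p+q)).[0] = (deriv p).[0] + (deriv q).[0].
Proof. by rewrite derivD hornerD. Qed.

Lemma drhoE (X : 'M[R]_2) : drho X = Dp 1%:M X.
Proof.
rewrite /drho mul_mx_scalar.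
apply/matrixP => i j; rewrite !mxE.
case: i => [[|[|[|i]]] Hi] //; case: j => [[|[|[|j]]] Hj] //=; rewrite ?mxE /=.
all: rewrite ?(expr2, dM, dD, derivC, derivX, horner0, hornerC, hornerX, hornerD, hornerM, mul0r, mulr0, add0r, addr0).
all: ring.
Qed.

Implicit Types g h : 'M[R]_2.
Lemma rhoM g h : rho (g *m h) = rho g *m rho h.
Proof.
rewrite [g]mk2E [h]mk2E; move: (g 0 0) (g 0 1) (g 1 0) (g 1 1) (h 0 0) (h 0 1) (h 1 0) (h 1 1) => *.
mxext; ring. Qed.
Lemma rho1 : rho (1%:M : 'M[R]_2) = 1%:M.
Proof. mxext; ring. Qed.

Lemma Dp_pol (P Q : 'M[R]_2) : Dp P Q = rho (P + Q) - rho P - rho Q.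
Proof.
rewrite [P]mk2E [Q]mk2E.
move: (P 0 0) (P 0 1) (P 1 0) (P 1 1) (Q 0 0) (Q 0 1) (Q 1 0) (Q 1 1) => *.
mxext; ring. Qed.
Lemma Dpol g h Z : rho g *m drho Z *m rho h = Dp (g *m h) (g *m Z *m h).
Proof.
rewrite drhoE !Dp_pol !mulmxBr !mulmxBl -!rhoM.
by rewrite mulmxDr mulmxDl !mulmx1.
Qed.
End S.

Arguments mk2 {R}.
Arguments mk3 {R}.
Arguments Dp {R}.


Section F.
Variable F : fieldType.
Implicit Types g h : 'M[F]_2.
Implicit Types p q r : 'M[F]_2 * 'cV[F]_3.

Lemma invE g B : B *m g = 1%:M -> g \in unitmx /\ invmx g = B.
Proof.
move=> H; have [uB ug] := mulmx1_unit H; split=> //.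
by rewrite -[invmx g]mul1mx -H -mulmxA mulmxV // mulmx1.
Qed.

Lemma invM g h : g \in unitmx -> h \in unitmx -> invmx (g *m h) = invmx h *m invmx g.
Proof.
move=> ug uh.
have : (invmx h *m invmx g) *m (g *m h) = 1%:M.
  by rewrite mulmxA -(mulmxA _ _ g) mulVmx // mulmx1 mulVmx.
by case/invE.
Qed.

Lemma equiv g Z : g \in unitmx -> rho g *m drho Z = drho (g *m Z *m invmx g) *m rho g.
Proof.
move=> ug; have := @Dpol _ g (invmx g) Z.
rewrite mulmxV // -drhoE => <-.
by rewrite -mulmxA -rhoM mulVmx // rho1 mulmx1.
Qed.

Lemma Adcomp g h v u p : g \in unitmx -> h \in unitmx ->
  Ad g v (Ad h u p) = Ad (g *m h) (v + rho g *m u) p.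
Proof.
move=> ug uh; case: p => X w; rewrite /Ad /=.
have E : g *m (h *m X *m invmx h) *m invmx g = g *m h *m X *m invmx (g *m h).
  by rewrite invM // !mulmxA.
rewrite E; congr pair.
rewrite mulmxDr !mulmxN (mulmxA (rho g) (drho _)) equiv // E.
by rewrite mulmxA rhoM mulmxDr opprD addrA -!mulmxA.
Qed.

Lemma Ad1 p : Ad 1%:M 0 p = p.
Proof. by case: p => X w; rewrite /Ad /= invmx1 mul1mx mulmx1 mulmx0 oppr0 add0r rho1 mul1mx. Qed.

Lemma orbit_refl p : orbit_ p p.
Proof. by exists 1%:M, 0; rewrite unitmx1 Ad1. Qed.

Lemma orbit_sym p q : orbit_ p q -> orbit_ q p.
Proof.
case=> g [v [ug ->]].
exists (invmx g), (- (rho (invmx g) *m v)); split; first by rewrite unitmx_inv.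
by rewrite Adcomp ?unitmx_inv // addNr mulVmx // Ad1.
Qed.

Lemma orbit_trans p q r : orbit_ p q -> orbit_ q r -> orbit_ p r.
Proof.
case=> g [v [ug ->]] [h [u [uh ->]]].
exists (h *m g), (u + rho h *m v); split; first by rewrite unitmx_mul uh ug.
by rewrite Adcomp.
Qed.

End F.


Section C.
Variable F : fieldType.
Implicit Types g h X : 'M[F]_2.
Implicit Types p q : 'M[F]_2 * 'cV[F]_3.

Lemma rho_mk (a b c d x y z : F) : rho (mk2 a b c d) *m mk3 x y z =
  mk3 (a^+2*x + a*b*y + b^+2*z) (2*a*c*x + (a*d + c*b)*y + 2*b*d*z)
      (c^+2*x + c*d*y + d^+2*z).
Proof. mxext; ring. Qed.

Lemma drho_mk (a b c d x y z : F) : drho (mk2 a b c d) *m mk3 x y z =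
  mk3 (2*a*x + b*y) (2*c*x + (a+d)*y + 2*b*z) (c*y + 2*d*z).
Proof. rewrite drhoE; mxext; ring. Qed.

Lemma mk2_mul (a b c d a' b' c' d' : F) : mk2 a b c d *m mk2 a' b' c' d' =
  mk2 (a*a' + b*c') (a*b' + b*d') (c*a' + d*c') (c*b' + d*d').
Proof. mxext; ring. Qed.

Lemma mk2_1 : 1%:M = mk2 1 0 0 1 :> 'M[F]_2.
Proof. mxext; ring. Qed.
Lemma mk2_0 : 0 = mk2 0 0 0 0 :> 'M[F]_2.
Proof. mxext; ring. Qed.
Lemma mk3_0 : 0 = mk3 0 0 0 :> 'cV[F]_3.
Proof. mxext; ring. Qed.
Lemma J2E : J2 F = mk2 0 1 0 0.
Proof. mxext; ring. Qed.
Lemma E21E : E21 F = mk2 0 0 1 0.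
Proof. mxext; ring. Qed.
Lemma mk3_add (x y z x' y' z' : F) : mk3 x y z + mk3 x' y' z' = mk3 (x+x') (y+y') (z+z').
Proof. mxext; ring. Qed.
Lemma mk3_opp (x y z : F) : - mk3 x y z = mk3 (-x) (-y) (-z).
Proof. mxext; ring. Qed.
Lemma mk3_inj (x y z x' y' z' : F) : mk3 x y z = mk3 x' y' z' -> [/\ x = x', y = y' & z = z'].
Proof.
move=> E; have := congr1 (fun v : 'cV[F]_3 => (v 0 0, v 1 0, v 2 0)) E.
by rewrite !mxE /= => -[-> -> ->].
Qed.
Lemma mk2_inj (a b c d a' b' c' d' : F) : mk2 a b c d = mk2 a' b' c' d' ->
  [/\ a = a', b = b', c = c' & d = d'].
Proof.
move=> E; have := congr1 (fun v : 'M[F]_2 => (v 0 0, v 0 1, v 1 0, v 1 1)) E.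
by rewrite !mxE /= => -[-> -> -> ->].
Qed.

Definition d2 X := X 0 0 * X 1 1 - X 0 1 * X 1 0.
Definition disc (w : 'cV[F]_3) := w 1 0 ^+ 2 - 4 * w 0 0 * w 2 0.

Lemma d2_mk (a b c d : F) : d2 (mk2 a b c d) = a * d - b * c.
Proof. by rewrite /d2 !mxE. Qed.
Lemma disc_mk (x y z : F) : disc (mk3 x y z) = y ^+ 2 - 4 * x * z.
Proof. by rewrite /disc !mxE. Qed.

Lemma d2M g h : d2 (g *m h) = d2 g * d2 h.
Proof.
rewrite [g]mk2E [h]mk2E mk2_mul !d2_mk; ring.
Qed.

Lemma disc_rho g w : disc (rho g *m w) = d2 g ^+ 2 * disc w.
Proof.
rewrite [g]mk2E [w]mk3E rho_mk !disc_mk d2_mk; ring.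
Qed.

Lemma unit_d2 g : g \in unitmx -> d2 g != 0.
Proof.
move=> ug; apply/eqP => H.
have := d2M g (invmx g); rewrite mulmxV // H mul0r mk2_1 d2_mk.
by move/eqP; rewrite mulr1 mulr0 subr0 oner_eq0.
Qed.

Lemma d2X X n : d2 (X ^+ n) = d2 X ^+ n.
Proof.
elim: n => [|n IH]; first by rewrite expr0 (_ : (1 : 'M[F]_2) = 1%:M) // mk2_1 d2_mk expr0; ring.
by rewrite exprS -mulmxE d2M IH exprS.
Qed.

Lemma CH X : X *m X = (X 0 0 + X 1 1) *: X - d2 X *: 1%:M.
Proof.
rewrite [X]mk2E mk2_mul d2_mk mk2_1.
apply/matrixP; case => [[|[|[|?]]] ?] //; case => [[|[|[|?]]] ?] //;
  rewrite !mxE /=; ring.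
Qed.

Lemma nil_cases X : nilpotent X ->
  X = 0 \/ (X != 0 /\ X 1 1 = - X 0 0 /\ X 0 0 * X 0 0 + X 0 1 * X 1 0 = 0).
Proof.
case=> n Hn.
have hd : d2 X = 0.
  have := d2X X n; rewrite Hn mk2_0 d2_mk mulr0 subr0.
  case: n Hn => [|n] Hn.
    by exfalso; move: Hn; rewrite expr0 => /eqP; rewrite oner_eq0.
  by move/esym/eqP; rewrite expf_eq0 => /eqP.
set t := X 0 0 + X 1 1.
have HX : forall m, X ^+ m.+1 = t ^+ m *: X.
  elim=> [|m IH]; first by rewrite expr1 expr0 scale1r.
  by rewrite exprS IH -mulmxE -scalemxAr CH hd scale0r subr0 scalerA exprSr.
case: (eqVneq X 0) => [->|nX]; [by left|right; split => //].
case: n Hn => [|n] Hn.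
  by exfalso; move: Hn; rewrite expr0 => /eqP; rewrite oner_eq0.
have ht : t = 0.
  apply/eqP; apply: contraTT nX => nt.
  move: Hn; rewrite HX => /(congr1 (fun M => (t ^+ n)^-1 *: M)).
  rewrite scalerA mulVf ?expf_neq0 // scale1r scaler0 => ->; by rewrite eqxx.
have h11 : X 1 1 = - X 0 0 by apply/eqP; rewrite -addr_eq0 addrC -/t ht.
split=> //; move: hd; rewrite /d2 h11 => /eqP; rewrite -oppr_eq0 => /eqP <-; ring.
Qed.

Lemma drho0 : drho (0 : 'M[F]_2) = 0.
Proof. rewrite drhoE; mxext; ring. Qed.

Lemma Ad0 g v w : Ad g v (0, w) = (0, rho g *m w).
Proof. by rewrite /Ad /= mulmx0 mul0mx drho0 mul0mx oppr0 add0r. Qed.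

Lemma orbit_nil X0 w0 p : X0 *m X0 = 0 -> orbit_ (X0, w0) p -> Ncone_ p.
Proof.
move=> H [g [v [ug ->]]]; exists 2%N; rewrite /= expr2 -mulmxE.
rewrite -!mulmxA (mulmxA (invmx g)) mulVmx // mul1mx.
by rewrite (mulmxA X0) H mul0mx mulmx0.
Qed.

Lemma orbit0 g u : g \in unitmx -> orbit_ (0, u) (0, rho g *m u).
Proof. by move=> ug; exists g, 0; rewrite Ad0. Qed.

End C.

Ltac nzs := try done; repeat (match goal with |- is_true (_ && _) => apply/andP; split end); try done; try assumption.
Ltac fld := field; nzs.

Lemma mk3P (R : comNzRingType) (x y z x' y' z' : R) : x = x' -> y = y' -> z = z' -> mk3 x y z = mk3 x' y' z'.
Proof. by move=> -> -> ->. Qed.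

Section D.
Variable k : closedFieldType.
Variable c0 : k.
Hypothesis hc0 : c0 != 0.
Hypothesis h2 : (2 : k) != 0.

Lemma h4 : (4 : k) != 0.
Proof. by rewrite (_ : 4 = 2 * 2) ?mulf_neq0 //; ring. Qed.
Lemma h8 : (8 : k) != 0.
Proof. by rewrite (_ : 8 = 2 * 4) ?mulf_neq0 ?h4 //; ring. Qed.

Lemma sqrt_ex (a : k) : exists x : k, x ^+ 2 = a.
Proof.
have [x Hx] := @solve_monicpoly k 2 (nth 0 [:: a]) isT.
by exists x; rewrite Hx !big_ord_recl big_ord0 /= expr0 mulr1 mul0r !addr0.
Qed.

Lemma sq_nz (x a : k) : x ^+ 2 = a -> a != 0 -> x != 0.
Proof. by move=> <-; apply: contraNneq => ->; rewrite expr0n. Qed.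

Lemma rank1 (a b c : k) : b ^+ 2 - 4 * a * c = 0 -> mk3 a b c != 0 ->
  orbit_ (0, mk3 0 0 c0) (0, mk3 a b c).
Proof.
move=> H nz; have H4 := h4.
case: (eqVneq a 0) => [a0|a0].
- subst a.
  have b0 : b = 0 by move: H; rewrite mulr0 mul0r subr0 => /eqP; rewrite expf_eq0 => /eqP.
  subst b.
  have c0' : c != 0 by apply: contraNneq nz => ->; rewrite mk3_0.
  have [γ hγ] := sqrt_ex (c / c0).
  have γ0 : γ != 0 by apply: sq_nz hγ _; rewrite mulf_neq0 ?invr_eq0.
  have [ug _] := @invE _ (mk2 1 0 0 γ) (mk2 1 0 0 γ^-1) ltac:(rewrite mk2_mul mk2_1; congr mk2; fld).
  have E : rho (mk2 1 0 0 γ) *m mk3 0 0 c0 = mk3 0 0 c.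
    rewrite rho_mk; apply: mk3P; try ring.
    by transitivity (γ^+2 * c0); [ring | rewrite hγ; fld].
  by rewrite -E; apply: orbit0.
- have [α hα] := sqrt_ex (a / c0).
  have α0 : α != 0 by apply: sq_nz hα _; rewrite mulf_neq0 ?invr_eq0.
  have Hb : b ^+ 2 = 4 * a * c by apply/eqP; rewrite -subr_eq0 H.
  have hc : c = b ^+ 2 / (4 * a) by rewrite Hb; fld.
  set β := b / (2 * a).
  have [ug _] := @invE _ (mk2 0 α 1 (α * β)) (mk2 (-β) 1 α^-1 0) ltac:(rewrite mk2_mul mk2_1; congr mk2; fld).
  have E : rho (mk2 0 α 1 (α * β)) *m mk3 0 0 c0 = mk3 a b c.
    rewrite rho_mk; apply: mk3P.
    + by transitivity (α^+2 * c0); [ring | rewrite hα; fld].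
    + by transitivity (2 * α^+2 * β * c0); [ring | rewrite hα /β; fld].
    + by transitivity (α^+2 * β^+2 * c0); [ring | rewrite hα hc /β; fld].
  by rewrite -E; apply: orbit0.
Qed.

Lemma rank2 (a b c : k) : b ^+ 2 - 4 * a * c != 0 ->
  orbit_ (0, mk3 (2 * c0) 0 c0) (0, mk3 a b c).
Proof.
move=> H; have H4 := h4; have H8 := h8.
case: (eqVneq a 0) => [a0|a0].
- subst a.
  have b0 : b != 0 by apply: contraNneq H => ->; rewrite mulr0 mul0r subr0 expr0n.
  have [σ hσ] := sqrt_ex (-2).
  have σ0 : σ != 0 by apply: sq_nz hσ _; rewrite oppr_eq0.
  have [μ hμ] : exists μ : k, μ = b / (8 * c0) + c / b by eexists.
  have [κ hκ] : exists κ : k, κ = - (b / (4 * c0) - 2 * c / b) / 2 by eexists.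
  have hkm : κ - μ = - (b / (4 * c0)) by rewrite hκ hμ; fld.
  have hkp : κ + μ = 2 * c / b by rewrite hκ hμ; fld.
  have δ0 : σ * κ - σ * μ != 0.
    by rewrite -mulrBr hkm mulf_neq0 // oppr_eq0 mulf_neq0 // invr_eq0 mulf_neq0.
  have [ug _] := @invE _ (mk2 1 σ μ (σ * κ))
     (mk2 (σ * κ / (σ * κ - σ * μ)) (- σ / (σ * κ - σ * μ)) (- μ / (σ * κ - σ * μ)) (1 / (σ * κ - σ * μ)))
     ltac:(rewrite mk2_mul mk2_1; congr mk2; fld).
  have E : rho (mk2 1 σ μ (σ * κ)) *m mk3 (2 * c0) 0 c0 = mk3 0 b c.
    rewrite rho_mk; apply: mk3P.
    + by transitivity (2 * c0 + σ^+2 * c0); [ring | rewrite hσ; ring].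
    + transitivity (4 * μ * c0 + σ^+2 * (2 * κ * c0)); first by ring.
      rewrite hσ; transitivity (- (4 * c0) * (κ - μ)); first by ring.
      by rewrite hkm; fld.
    + transitivity (2 * μ^+2 * c0 + σ^+2 * (κ^+2 * c0)); first by ring.
      rewrite hσ; transitivity (- (2 * c0) * (κ - μ) * (κ + μ)); first by ring.
      by rewrite hkm hkp; fld.
  by rewrite -E; apply: orbit0.
- have [α hα] := sqrt_ex (a / (2 * c0)).
  have α0 : α != 0 by apply: sq_nz hα _; rewrite mulf_neq0 ?invr_eq0 ?mulf_neq0.
  have [γ hγ] := sqrt_ex ((4 * a * c - b ^+ 2) / (4 * a * c0)).
  have γ0 : γ != 0.
    apply: sq_nz hγ _; rewrite mulf_neq0 ?invr_eq0 ?mulf_neq0 //.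
    by rewrite -oppr_eq0 opprB.
  set β := b / (2 * a).
  have [ug _] := @invE _ (mk2 α 0 (α * β) γ) (mk2 α^-1 0 (- (β / γ)) γ^-1)
     ltac:(rewrite mk2_mul mk2_1; congr mk2; fld).
  have E : rho (mk2 α 0 (α * β) γ) *m mk3 (2 * c0) 0 c0 = mk3 a b c.
    rewrite rho_mk; apply: mk3P.
    + by transitivity (α^+2 * (2 * c0)); [ring | rewrite hα; fld].
    + by transitivity (α^+2 * (4 * β * c0)); [ring | rewrite hα /β; fld].
    + transitivity (α^+2 * (β^+2 * (2 * c0)) + γ^+2 * c0); first by ring.
      by rewrite hα hγ /β; fld.
  by rewrite -E; apply: orbit0.
Qed.

Lemma J2case (a b c : k) :
  orbit_ (J2 k, 0) (J2 k, mk3 a b c) \/ orbit_ (J2 k, mk3 0 0 c0) (J2 k, mk3 a b c).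
Proof.
case: (eqVneq c 0) => [->|c0'].
- left; exists 1%:M, (mk3 0 (-a) (-b/2)); split; first exact: unitmx1.
  rewrite /Ad /= invmx1 mul1mx mulmx1 mulmx0 addr0 J2E drho_mk mk3_opp.
  by congr pair; apply: mk3P; fld.
- right.
  have [s hs] := sqrt_ex (c / c0).
  have s0 : s != 0 by apply: sq_nz hs _; rewrite mulf_neq0 ?invr_eq0.
  have [ug iG] := @invE _ (mk2 s 0 0 s) (mk2 s^-1 0 0 s^-1)
     ltac:(rewrite mk2_mul mk2_1; congr mk2; fld).
  exists (mk2 s 0 0 s), (mk3 0 (-a) (-b/2)); split => //.
  have E1 : mk2 s 0 0 s *m mk2 0 1 0 0 *m mk2 s^-1 0 0 s^-1 = mk2 0 1 0 0.
    by rewrite !mk2_mul; congr mk2; fld.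
  rewrite /Ad /= iG J2E E1 drho_mk rho_mk mk3_opp mk3_add.
  congr pair; apply: mk3P; try fld.
  by symmetry; transitivity (s^+2 * c0); [ring | rewrite hs; fld].
Qed.

Lemma conjJ2 (p q r : k) : p * p + q * r = 0 -> mk2 p q r (-p) != 0 ->
  exists g, g \in unitmx /\ g *m J2 k *m invmx g = mk2 p q r (-p).
Proof.
move=> H nz; case: (eqVneq r 0) => [r0|r0].
- subst r.
  have p0 : p = 0 by move/eqP: H; rewrite mulr0 addr0 mulf_eq0 orbb => /eqP.
  subst p.
  have q0 : q != 0 by apply: contraNneq nz => ->; rewrite oppr0 -mk2_0.
  have [ug iG] := @invE _ (mk2 q 0 0 1) (mk2 q^-1 0 0 1)
     ltac:(rewrite mk2_mul mk2_1; congr mk2; fld).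
  exists (mk2 q 0 0 1); split => //.
  by rewrite iG J2E !mk2_mul; congr mk2; fld.
- have hq : q = - (p * p) / r.
    by apply: (mulIf r0); rewrite mulrVK ?unitfE // -(subr0 (q * r)) -H; ring.
  have [ug iG] := @invE _ (mk2 p 1 r 0) (mk2 0 r^-1 1 (- (p / r)))
     ltac:(rewrite mk2_mul mk2_1; congr mk2; fld).
  exists (mk2 p 1 r 0); split => //.
  by rewrite iG J2E !mk2_mul hq; congr mk2; fld.
Qed.

End D.

Theorem lemma2p1 (k : closedFieldType) (hchar : [pchar k] =i pred0)
  (v0 : 'cV[k]_3) (hv0 : lowest_weight_vector v0) :
  let v1 := drho (J2 k) *m v0 in
  let v2 := drho (J2 k) *m v1 in
  let rep := fun i : 'I_5 =>
    nth (0, 0) [:: (0, 0); (0, v0); (0, v0 + v2); (J2 k, 0); (J2 k, v0)] i in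
  (forall p : 'M[k]_2 * 'cV[k]_3,
      Ncone_ p <-> exists i : 'I_5, orbit_ (rep i) p) /\
  (forall i j : 'I_5, i != j ->
      forall p, ~ (orbit_ (rep i) p /\ orbit_ (rep j) p)).
Proof.
have h2 : (2 : k) != 0 by have := hchar 2%N; rewrite !inE /= => ->.
have [c0 [hc0 ev0]] : exists c0, c0 != 0 /\ v0 = mk3 0 0 c0.
  case: hv0 => nz [_ hE]; move: hE nz; rewrite [v0]mk3E E21E drho_mk mk3_0.
  case/mk3_inj => _ e1 e2.
  have y0 : v0 1 0 = 0 by rewrite -e2; ring.
  have x0 : v0 0 0 = 0.
    have : 2 * v0 0 0 = 0 by rewrite -e1 y0; ring.
    by move/eqP; rewrite mulf_eq0 (negbTE h2) => /eqP.
  rewrite x0 y0 => nz; exists (v0 2 0); split => //.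
  by apply: contraNneq nz => ->; rewrite -mk3_0.
move=> v1 v2 rep.
have ev1 : v1 = mk3 0 (2 * c0) 0 by rewrite /v1 ev0 J2E drho_mk; apply: mk3P; ring.
have ev2 : v2 = mk3 (2 * c0) 0 0 by rewrite /v2 ev1 J2E drho_mk; apply: mk3P; ring.
have e02 : v0 + v2 = mk3 (2 * c0) 0 c0 by rewrite ev0 ev2 mk3_add; apply: mk3P; ring.
have J2nz : J2 k != 0 by rewrite J2E mk2_0; apply/eqP => /mk2_inj [_ /eqP]; rewrite oner_eq0.
have J2sq : J2 k *m J2 k = 0.
  by rewrite J2E mk2_mul !(mul0r, mulr0, addr0); exact: (esym (mk2_0 _)).
have key : forall i j : 'I_5, (i < j)%N -> ~ orbit_ (rep i) (rep j).
{   case=> [[|[|[|[|[|?]]]]] ?] //; case=> [[|[|[|[|[|?]]]]] ?] //= _;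
    rewrite /rep /= ?e02 ?ev0; case=> g [v [ug E]]; move: E.
  - rewrite Ad0 mulmx0 mk3_0 => -[/mk3_inj [_ _ /eqP]]; by rewrite (negbTE hc0).
  - rewrite Ad0 mulmx0 mk3_0 => -[/mk3_inj [_ _ /eqP]]; by rewrite (negbTE hc0).
  - by rewrite Ad0 => -[/eqP]; rewrite (negbTE J2nz).
  - by rewrite Ad0 => -[/eqP]; rewrite (negbTE J2nz).
  - rewrite Ad0 => -[/(congr1 (@disc k))]; rewrite disc_rho !disc_mk => /eqP.
    rewrite mulr0 mul0r subr0 expr0n mulr0 sub0r oppr_eq0; apply/negP.
    by rewrite !mulf_neq0 ?(@h4 k h2).
  - by rewrite Ad0 => -[/eqP]; rewrite (negbTE J2nz).
  - by rewrite Ad0 => -[/eqP]; rewrite (negbTE J2nz).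
  - by rewrite Ad0 => -[/eqP]; rewrite (negbTE J2nz).
  - by rewrite Ad0 => -[/eqP]; rewrite (negbTE J2nz).
  - rewrite /Ad /= => -[E1 E2]; move: E2; rewrite -E1 mulmx0 addr0 J2E [v]mk3E drho_mk mk3_opp.
    case/mk3_inj => _ _ E3; move: hc0; rewrite E3; apply/negP; rewrite negbK; apply/eqP; ring. }
split.
- case=> X w; split.
  + move=> HN; case: (@nil_cases k X HN) => [/= X0 | [nX [h11 hpq]]].
    * subst X; rewrite [w]mk3E.
      move: (w 0 0) (w 1 0) (w 2 0) => a b c.
      case: (eqVneq (mk3 a b c) 0) => [->|nz].
        by exists (@Ordinal 5 0 isT); rewrite /rep /=; exact: orbit_refl.
      case: (eqVneq (b ^+ 2 - 4 * a * c) 0) => [d0|d0].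
        by exists (@Ordinal 5 1 isT); rewrite /rep /= ev0; exact: rank1.
      by exists (@Ordinal 5 2 isT); rewrite /rep /= e02; exact: rank2.
    * move: nX HN; rewrite /= [X]mk2E h11 => nX HN.
      have [g [ug eg]] := @conjJ2 k _ _ _ hpq nX.
      set w' := rho (invmx g) *m w.
      have O1 : orbit_ (J2 k, w') (mk2 (X 0 0) (X 0 1) (X 1 0) (- X 0 0), w).
        exists g, 0; split => //; rewrite /Ad /= eg mulmx0 oppr0 add0r /w'.
        by rewrite mulmxA -rhoM mulmxV // rho1 mul1mx.
      have [O2|O2] := @J2case k c0 hc0 h2 (w' 0 0) (w' 1 0) (w' 2 0); rewrite -mk3E in O2.
        by exists (@Ordinal 5 3 isT); rewrite /rep /=; exact: orbit_trans O2 O1.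
      by exists (@Ordinal 5 4 isT); rewrite /rep /= ev0; exact: orbit_trans O2 O1.
  + case=> -[[|[|[|[|[|?]]]]] ?] // O; rewrite /rep /= in O; apply: orbit_nil O; first [exact: mul0mx | exact: J2sq].
- move=> i j ij p [Oi Oj].
  have Oij := @orbit_trans k _ _ _ Oi (@orbit_sym k _ _ Oj).
  case: (ltngtP i j) => [lt|gt|eq].
  + exact: key lt Oij.
  + exact: key gt (@orbit_sym k _ _ Oij).
  + by move: ij; rewrite (val_inj eq) eqxx.
Qed.
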